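(* Let $A$ and $B$ be Hermitian (bounded) operators on a finite-dimensional Hilbert space, and let $\gamma:[0,\infty)\to\mathbb{R}$ be a non-decreasing continuous function such that $\|e^{-iAt}-e^{-iBt}\|_2\le t\,\gamma(t)$ for all $t\ge 0$. Then $\|A-B\|_2\le\gamma(t)$ for every $t\ge 0$.
   Context: $\|\cdot\|_2$ denotes the operator (spectral) norm. *)

(* Defs.v *)
From Stdlib Require Import Reals Lra Lia Arith Factorial.
Open Scope R_scope.

(* Complex numbers z = (Re z, Im z). *)
Definition Cpx : Type := (R * R)%type.
Definition Cadd (z w : Cpx) : Cpx := (fst z + fst w, snd z + snd w).
Definition Copp (z : Cpx) : Cpx := (- fst z, - snd z).
Definition Cmul (z w : Cpx) : Cpx :=
  (fst z * fst w - snd z * snd w, fst z * snd w + snd z * fst w).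
Definition Cconj (z : Cpx) : Cpx := (fst z, - snd z).
Definition Cscale (a : R) (z : Cpx) : Cpx := (a * fst z, a * snd z).
Definition Cabs2 (z : Cpx) : R := fst z * fst z + snd z * snd z.

Fixpoint rsum (n : nat) (f : nat -> R) : R :=
  match n with O => 0 | S k => rsum k f + f k end.
Fixpoint csum (n : nat) (f : nat -> Cpx) : Cpx :=
  match n with O => (0, 0) | S k => Cadd (csum k f) (f k) end.

(* n x n complex matrices (operators on C^n), entries indexed by i,j < n;
   vectors in C^n, entries indexed by i < n. Values outside the range are
   irrelevant. *)
Definition Mat : Type := nat -> nat -> Cpx.
Definition Vec : Type := nat -> Cpx.

Definition hermitian (n : nat) (A : Mat) : Prop :=
  forall i j, (i < n)%nat -> (j < n)%nat -> A i j = Cconj (A j i).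

Definition mmul (n : nat) (A B : Mat) : Mat :=
  fun i j => csum n (fun k => Cmul (A i k) (B k j)).
Definition mid : Mat := fun i j => if Nat.eqb i j then (1, 0) else (0, 0).
Fixpoint mpow (n : nat) (A : Mat) (k : nat) : Mat :=
  match k with O => mid | S k' => mmul n (mpow n A k') A end.
Definition msub (A B : Mat) : Mat := fun i j => Cadd (A i j) (Copp (B i j)).
Definition mscal (c : Cpx) (A : Mat) : Mat := fun i j => Cmul c (A i j).

Definition expm_partial (n : nat) (M : Mat) (N : nat) : Mat :=
  fun i j => csum (S N) (fun k => Cscale (/ INR (fact k)) (mpow n M k i j)).

Definition is_expm (n : nat) (M E : Mat) : Prop :=
  forall i j, (i < n)%nat -> (j < n)%nat ->
    Un_cv (fun N => fst (expm_partial n M N i j)) (fst (E i j)) /\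
    Un_cv (fun N => snd (expm_partial n M N i j)) (snd (E i j)).

Definition mvapply (n : nat) (M : Mat) (v : Vec) : Vec :=
  fun i => csum n (fun j => Cmul (M i j) (v j)).
Definition vnorm (n : nat) (v : Vec) : R := sqrt (rsum n (fun i => Cabs2 (v i))).

Definition is_opnorm (n : nat) (M : Mat) (r : R) : Prop :=
  is_lub (fun x => exists v : Vec, vnorm n v <= 1 /\ x = vnorm n (mvapply n M v)) r.

Definition continuous_on_nonneg (g : R -> R) : Prop :=
  forall t, 0 <= t -> forall eps, 0 < eps -> exists delta, 0 < delta /\
    forall s, 0 <= s -> Rabs (s - t) < delta -> Rabs (g s - g t) < eps.

Definition nondecreasing_on_nonneg (g : R -> R) : Prop :=
  forall s t, 0 <= s -> s <= t -> g s <= g t.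

(* Main.v *)
Require Import Defs.
From Stdlib Require Import Reals Lra Lia Psatz ClassicalEpsilon Factorial.
Open Scope R_scope.

Definition N1 (z : Cpx) : R := Rabs (fst z) + Rabs (snd z).

Ltac rabs_all := repeat match goal with
  | |- context [Rabs ?x] => let H := fresh in
      destruct (Rcase_abs x) as [H|H]; [rewrite (Rabs_left x H) | rewrite (Rabs_right x H)]
  | H0 : context [Rabs ?x] |- _ => let H := fresh in
      destruct (Rcase_abs x) as [H|H]; [rewrite (Rabs_left x H) in H0 | rewrite (Rabs_right x H) in H0]
  end.

Lemma N1_nonneg z : 0 <= N1 z.
Proof. unfold N1. pose proof (Rabs_pos (fst z)); pose proof (Rabs_pos (snd z)); lra. Qed.

Lemma N1_add z w : N1 (Cadd z w) <= N1 z + N1 w.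
Proof. destruct z as [a b], w as [c d]; unfold N1, Cadd; simpl. rabs_all; lra. Qed.

Lemma Rabs_mul_le a b c d : Rabs (a*c - b*d) <= Rabs a * Rabs c + Rabs b * Rabs d.
Proof.
  eapply Rle_trans. apply Rabs_triang. rewrite Rabs_Ropp, !Rabs_mult. lra.
Qed.
Lemma Rabs_mul_le' a b c d : Rabs (a*d + b*c) <= Rabs a * Rabs d + Rabs b * Rabs c.
Proof.
  eapply Rle_trans. apply Rabs_triang. rewrite !Rabs_mult. lra.
Qed.

Lemma N1_mul z w : N1 (Cmul z w) <= N1 z * N1 w.
Proof.
  destruct z as [a b], w as [c d]; unfold N1, Cmul; simpl.
  pose proof (Rabs_mul_le a b c d). pose proof (Rabs_mul_le' a b c d).
  pose proof (Rabs_pos a). pose proof (Rabs_pos b). pose proof (Rabs_pos c). pose proof (Rabs_pos d).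
  nra.
Qed.

Lemma fst_le_N1 z : Rabs (fst z) <= N1 z.
Proof. unfold N1. pose proof (Rabs_pos (snd z)); lra. Qed.
Lemma snd_le_N1 z : Rabs (snd z) <= N1 z.
Proof. unfold N1. pose proof (Rabs_pos (fst z)); lra. Qed.

Lemma Cabs2_le_N1 z : Cabs2 z <= N1 z ^ 2.
Proof. destruct z as [a b]; unfold Cabs2, N1; simpl. rabs_all; nra. Qed.

Lemma Cabs2_nonneg z : 0 <= Cabs2 z.
Proof. unfold Cabs2. nra. Qed.

Lemma rsum_ext n f g : (forall k, (k < n)%nat -> f k = g k) -> rsum n f = rsum n g.
Proof. induction n; simpl; intros H; auto. rewrite IHn by (intros; apply H; lia). rewrite H by lia. auto. Qed.
Lemma rsum_le n f g : (forall k, (k < n)%nat -> f k <= g k) -> rsum n f <= rsum n g.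
Proof. induction n; simpl; intros H. lra. pose proof (IHn (fun k Hk => H k ltac:(lia))). pose proof (H n ltac:(lia)). lra. Qed.
Lemma rsum_plus n f g : rsum n (fun k => f k + g k) = rsum n f + rsum n g.
Proof. induction n; simpl. lra. rewrite IHn. lra. Qed.
Lemma rsum_scal n c f : rsum n (fun k => c * f k) = c * rsum n f.
Proof. induction n; simpl. lra. rewrite IHn. lra. Qed.
Lemma rsum_const n c : rsum n (fun _ => c) = INR n * c.
Proof. induction n; simpl rsum. simpl; lra. rewrite IHn, S_INR. lra. Qed.
Lemma rsum_nonneg n f : (forall k, (k < n)%nat -> 0 <= f k) -> 0 <= rsum n f.
Proof. intros H. rewrite <- (Rmult_0_r (INR n)), <- rsum_const. apply rsum_le. auto. Qed.
Lemma term_le_rsum n f i : (forall k, (k < n)%nat -> 0 <= f k) -> (i < n)%nat -> f i <= rsum n f.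
Proof.
  induction n; intros H Hi. lia. simpl.
  destruct (Nat.eq_dec i n). subst. pose proof (rsum_nonneg n f (fun k Hk => H k ltac:(lia))). lra.
  pose proof (IHn (fun k Hk => H k ltac:(lia)) ltac:(lia)). pose proof (H n ltac:(lia)). lra.
Qed.

Lemma fst_csum n f : fst (csum n f) = rsum n (fun k => fst (f k)).
Proof. induction n; simpl; auto. rewrite IHn; auto. Qed.
Lemma snd_csum n f : snd (csum n f) = rsum n (fun k => snd (f k)).
Proof. induction n; simpl; auto. rewrite IHn; auto. Qed.
Lemma N1_csum n f : N1 (csum n f) <= rsum n (fun k => N1 (f k)).
Proof. induction n; simpl. unfold N1; simpl; rewrite Rabs_R0; lra.
  eapply Rle_trans. apply N1_add. lra. Qed.

Lemma csum_fst_series N f : fst (csum (S N) f) = sum_f_R0 (fun k => fst (f k)) N.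
Proof. induction N. simpl. lra. change (csum (S (S N)) f) with (Cadd (csum (S N) f) (f (S N))).
  simpl sum_f_R0. rewrite <- IHN. reflexivity. Qed.
Lemma csum_snd_series N f : snd (csum (S N) f) = sum_f_R0 (fun k => snd (f k)) N.
Proof. induction N. simpl. lra. change (csum (S (S N)) f) with (Cadd (csum (S N) f) (f (S N))).
  simpl sum_f_R0. rewrite <- IHN. reflexivity. Qed.

Lemma rsum_delta n i g : rsum n (fun k => if Nat.eqb i k then g k else 0) = if Nat.ltb i n then g i else 0.
Proof.
  induction n; simpl. { destruct (Nat.ltb i 0) eqn:E; auto; apply Nat.ltb_lt in E; lia. }
  rewrite IHn. destruct (Nat.eqb i n) eqn:E1.
  - apply Nat.eqb_eq in E1; subst. destruct (Nat.ltb_spec n n), (Nat.ltb_spec n (S n)); try lia; lra.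
  - apply Nat.eqb_neq in E1. destruct (Nat.ltb_spec i n), (Nat.ltb_spec i (S n)); try lia; lra.
Qed.

Lemma mid_mul n M i j : (i < n)%nat -> mmul n mid M i j = M i j.
Proof.
  intros Hi. unfold mmul. destruct (M i j) as [a b] eqn:EM.
  apply injective_projections.
  - rewrite fst_csum. rewrite (rsum_ext n _ (fun k => if Nat.eqb i k then fst (M k j) else 0)).
    rewrite rsum_delta. replace (Nat.ltb i n) with true by (symmetry; apply Nat.ltb_lt; lia). rewrite EM; auto.
    intros k _. unfold mid. destruct (Nat.eqb i k); simpl; ring.
  - rewrite snd_csum. rewrite (rsum_ext n _ (fun k => if Nat.eqb i k then snd (M k j) else 0)).
    rewrite rsum_delta. replace (Nat.ltb i n) with true by (symmetry; apply Nat.ltb_lt; lia). rewrite EM; auto.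
    intros k _. unfold mid. destruct (Nat.eqb i k); simpl; ring.
Qed.

Lemma N1_mid i j : N1 (mid i j) <= 1.
Proof. unfold mid, N1. destruct (Nat.eqb i j); simpl; rewrite ?Rabs_R0, ?Rabs_R1; lra. Qed.

Lemma mpow_bound n M m : 0 <= m -> (forall i j, (i < n)%nat -> (j < n)%nat -> N1 (M i j) <= m) ->
  forall k i j, (i < n)%nat -> (j < n)%nat -> N1 (mpow n M k i j) <= (INR n * m) ^ k.
Proof.
  intros Hm HM k. induction k; intros i j Hi Hj.
  - simpl. apply N1_mid.
  - simpl mpow. unfold mmul. eapply Rle_trans. apply N1_csum.
    eapply Rle_trans. apply (rsum_le n _ (fun _ => (INR n * m)^k * m)).
    intros l Hl. eapply Rle_trans. apply N1_mul. apply Rmult_le_compat; auto using N1_nonneg.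
    rewrite rsum_const. simpl. lra.
Qed.
Lemma Un_cv_ext u v l : (forall n, u n = v n) -> Un_cv u l -> Un_cv v l.
Proof. intros He H eps Heps. destruct (H eps Heps) as [N HN]. exists N. intros k Hk. rewrite <- He. auto. Qed.

Lemma series_cv (a : nat -> R) x : 0 <= x -> (forall k, Rabs (a k) <= / INR (fact k) * x ^ k) ->
  {l | Un_cv (fun N => sum_f_R0 a N) l}.
Proof.
  intros Hx Ha. set (b := fun k => / INR (fact k) * x ^ k).
  destruct (exist_exp x) as [lb Hb].
  assert (Hb' : Un_cv (fun N => sum_f_R0 b N) lb) by exact Hb.
  assert (H2 : {l | Un_cv (fun N => sum_f_R0 (fun k => b k + b k) N) l}).
  { exists (lb + lb). eapply Un_cv_ext. 2: apply (CV_plus _ _ _ _ Hb' Hb'). intros N. simpl. rewrite plus_sum. auto. }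
  assert (H3 : {l | Un_cv (fun N => sum_f_R0 (fun k => a k + b k) N) l}).
  { apply (Rseries_CV_comp _ (fun k => b k + b k)); auto. intros k. pose proof (Ha k). unfold b in *. revert H. rabs_all; intros; lra. }
  destruct H3 as [l3 H3]. exists (l3 - lb). eapply Un_cv_ext. 2: apply (CV_minus _ _ _ _ H3 Hb').
  intros N. simpl. rewrite <- minus_sum. apply sum_eq. intros. lra.
Qed.

Lemma entry_bound n (Y : Mat) : exists m, 0 <= m /\ forall i j, (i < n)%nat -> (j < n)%nat -> N1 (Y i j) <= m.
Proof.
  exists (rsum n (fun i => rsum n (fun j => N1 (Y i j)))). split.
  - apply rsum_nonneg. intros. apply rsum_nonneg. intros. apply N1_nonneg.
  - intros i j Hi Hj.
    assert (A1 : N1 (Y i j) <= rsum n (fun j => N1 (Y i j))).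
    { apply (term_le_rsum n (fun j => N1 (Y i j))); auto. intros; apply N1_nonneg. }
    assert (A2 : rsum n (fun j => N1 (Y i j)) <= rsum n (fun i => rsum n (fun j => N1 (Y i j)))).
    { apply (term_le_rsum n (fun i => rsum n (fun j => N1 (Y i j)))); auto.
      intros; apply rsum_nonneg; intros; apply N1_nonneg. }
    lra.
Qed.

Lemma expm_fst n M N i j : fst (expm_partial n M N i j) = sum_f_R0 (fun k => / INR (fact k) * fst (mpow n M k i j)) N.
Proof. unfold expm_partial. rewrite csum_fst_series. reflexivity. Qed.
Lemma expm_snd n M N i j : snd (expm_partial n M N i j) = sum_f_R0 (fun k => / INR (fact k) * snd (mpow n M k i j)) N.
Proof. unfold expm_partial. rewrite csum_snd_series. reflexivity. Qed.

Lemma term_bound n M m k i j : 0 <= m -> (forall i j, (i < n)%nat -> (j < n)%nat -> N1 (M i j) <= m) ->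
  (i < n)%nat -> (j < n)%nat ->
  Rabs (/ INR (fact k) * fst (mpow n M k i j)) <= / INR (fact k) * (INR n * m) ^ k /\
  Rabs (/ INR (fact k) * snd (mpow n M k i j)) <= / INR (fact k) * (INR n * m) ^ k.
Proof.
  intros Hm HM Hi Hj. pose proof (mpow_bound n M m Hm HM k i j Hi Hj).
  assert (0 < / INR (fact k)) by (apply Rinv_0_lt_compat, INR_fact_lt_0).
  rewrite !Rabs_mult, (Rabs_right (/ _)) by lra. split; apply Rmult_le_compat_l; try lra.
  eapply Rle_trans. apply fst_le_N1. auto. eapply Rle_trans. apply snd_le_N1. auto.
Qed.

Lemma expm_exists n M : exists E, is_expm n M E.
Proof.
  destruct (entry_bound n M) as [m [Hm HM]].
  assert (H : forall i j, exists z : Cpx, (i < n)%nat -> (j < n)%nat ->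
    Un_cv (fun N => fst (expm_partial n M N i j)) (fst z) /\
    Un_cv (fun N => snd (expm_partial n M N i j)) (snd z)).
  { intros i j. destruct (Compare_dec.lt_dec i n) as [Hi|Hi]; [destruct (Compare_dec.lt_dec j n) as [Hj|Hj]|].
    2,3: exists (0,0); intros; lia.
    assert (Hx : 0 <= INR n * m) by (apply Rmult_le_pos; auto using pos_INR).
    destruct (series_cv (fun k => / INR (fact k) * fst (mpow n M k i j)) _ Hx) as [l1 H1].
    { intros k. apply (term_bound n M m k i j); auto. }
    destruct (series_cv (fun k => / INR (fact k) * snd (mpow n M k i j)) _ Hx) as [l2 H2].
    { intros k. apply (term_bound n M m k i j); auto. }
    exists (l1, l2). intros _ _. split; cbn [fst snd].
    eapply Un_cv_ext. 2: apply H1. intros; rewrite expm_fst; auto.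
    eapply Un_cv_ext. 2: apply H2. intros; rewrite expm_snd; auto. }
  exists (fun i j => proj1_sig (constructive_indefinite_description _ (H i j))).
  intros i j Hi Hj. destruct (constructive_indefinite_description _ (H i j)) as [z Hz]. simpl. auto.
Qed.

Lemma lim_bound u L c b : Un_cv u L -> (forall N, (N >= 1)%nat -> Rabs (u N - c) <= b) -> Rabs (L - c) <= b.
Proof.
  intros Hu Hb. destruct (Rle_or_lt (Rabs (L - c)) b) as [H|H]; auto. exfalso.
  destruct (Hu (Rabs (L - c) - b) ltac:(lra)) as [N HN].
  specialize (HN (max N 1) ltac:(lia)). specialize (Hb (max N 1) ltac:(lia)). unfold Rdist in HN.
  pose proof (Rabs_triang (L - u (max N 1)) (u (max N 1) - c)).
  replace (L - u (max N 1) + (u (max N 1) - c)) with (L - c) in H0 by ring.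
  rewrite Rabs_minus_sym in HN. lra.
Qed.

Lemma fact_ge k : 2 ^ (S k) <= INR (fact (S (S k))).
Proof.
  induction k. simpl. lra.
  change (fact (S (S (S k)))) with ((S (S (S k))) * fact (S (S k)))%nat.
  rewrite mult_INR. change (2 ^ S (S k)) with (2 * 2 ^ (S k)).
  assert (2 <= INR (S (S (S k)))). { rewrite !S_INR. pose proof (pos_INR k). lra. }
  pose proof (pow_lt 2 (S k) ltac:(lra)). nra.
Qed.

Lemma pow_le1 x k : 0 <= x <= 1 -> x ^ k <= 1.
Proof. intros H. induction k; simpl. lra. pose proof (pow_le x k ltac:(lra)). nra. Qed.

Lemma partial_rem (a : nat -> R) c x : 0 <= x <= 1 -> a 0%nat + a 1%nat = c ->
  (forall k, Rabs (a k) <= / INR (fact k) * x ^ k) ->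
  forall N, Rabs (sum_f_R0 a (S N) - c) <= x ^ 2 * (1 - / 2 ^ N).
Proof.
  intros Hx Hc Ha N. induction N.
  - simpl sum_f_R0. rewrite <- Hc. simpl. replace (a 0%nat + a 1%nat - (a 0%nat + a 1%nat)) with 0 by ring.
    rewrite Rabs_R0. lra.
  - change (sum_f_R0 a (S (S N))) with (sum_f_R0 a (S N) + a (S (S N))).
    pose proof (Ha (S (S N))).
    assert (Hf := fact_ge N). pose proof (pow_lt 2 (S N) ltac:(lra)).
    assert (Hp : x ^ (S (S N)) <= x ^ 2). { replace (S (S N)) with (2 + N)%nat by lia. rewrite pow_add.
       pose proof (pow_le1 x N Hx). pose proof (pow_le x 2 ltac:(lra)). nra. }
    assert (Hb : / INR (fact (S (S N))) * x ^ (S (S N)) <= x ^ 2 * / 2 ^ (S N)).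
    { rewrite (Rmult_comm (x ^ 2)). apply Rmult_le_compat; auto. left; apply Rinv_0_lt_compat, INR_fact_lt_0. apply pow_le; lra.
      apply Rinv_le_contravar; lra. }
    replace (sum_f_R0 a (S N) + a (S (S N)) - c) with ((sum_f_R0 a (S N) - c) + a (S (S N))) by ring.
    eapply Rle_trans. apply Rabs_triang.
    change (2 ^ S N) with (2 * 2 ^ N) in *. rewrite Rinv_mult in *.
    pose proof (pow_le x 2 ltac:(lra)). nra.
Qed.

Lemma expm_rem n M E m : 0 <= m -> INR n * m <= 1 ->
  (forall i j, (i < n)%nat -> (j < n)%nat -> N1 (M i j) <= m) -> is_expm n M E ->
  forall i j, (i < n)%nat -> (j < n)%nat ->
   Rabs (fst (E i j) - (fst (mid i j) + fst (M i j))) <= (INR n * m) ^ 2 /\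
   Rabs (snd (E i j) - (snd (mid i j) + snd (M i j))) <= (INR n * m) ^ 2.
Proof.
  intros Hm Hx HM HE i j Hi Hj. destruct (HE i j Hi Hj) as [H1 H2].
  assert (Hx' : 0 <= INR n * m <= 1) by (split; auto; apply Rmult_le_pos; auto using pos_INR).
  assert (Hm1 : mpow n M 1 i j = M i j) by (simpl; apply mid_mul; auto).
  assert (f0 : / INR (fact 0) = 1) by (simpl; lra). assert (f1 : / INR (fact 1) = 1) by (simpl; lra).
  split; (eapply lim_bound; [eassumption|]); intros N HN; destruct N as [|N]; try lia.
  - rewrite expm_fst. eapply Rle_trans. apply partial_rem with (x := INR n * m); auto.
    simpl mpow at 1. rewrite f0, f1, Hm1. simpl. ring.
    intros k; apply (term_bound n M m k i j); auto.
    pose proof (pow_lt 2 N ltac:(lra)). pose proof (Rinv_0_lt_compat _ H). pose proof (pow_le (INR n * m) 2 ltac:(lra)). nra.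
  - rewrite expm_snd. eapply Rle_trans. apply partial_rem with (x := INR n * m); auto.
    simpl mpow at 1. rewrite f0, f1, Hm1. simpl. ring.
    intros k; apply (term_bound n M m k i j); auto.
    pose proof (pow_lt 2 N ltac:(lra)). pose proof (Rinv_0_lt_compat _ H). pose proof (pow_le (INR n * m) 2 ltac:(lra)). nra.
Qed.
Lemma vnorm_le1_N1 n v : vnorm n v <= 1 -> forall j, (j < n)%nat -> N1 (v j) <= 2.
Proof.
  intros Hv j Hj. unfold vnorm in Hv.
  set (S := rsum n (fun i => Cabs2 (v i))) in *.
  assert (HS : 0 <= S) by (apply rsum_nonneg; intros; apply Cabs2_nonneg).
  assert (S <= 1). { rewrite <- (sqrt_sqrt S HS). pose proof (sqrt_pos S). nra. }
  assert (Cabs2 (v j) <= S) by (apply (term_le_rsum n (fun i => Cabs2 (v i))); auto; intros; apply Cabs2_nonneg).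
  assert (Hc : Cabs2 (v j) <= 1) by lra. clear -Hc.
  destruct (v j) as [a b]. unfold Cabs2, N1 in *; simpl in *.
  assert (Ha : Rabs a <= 1). { apply Rabs_le. split; nra. }
  assert (Hb : Rabs b <= 1). { apply Rabs_le. split; nra. }
  lra.
Qed.

Lemma Yv_bound n Y d v : 0 <= d -> (forall i j, (i < n)%nat -> (j < n)%nat -> N1 (Y i j) <= d) ->
  vnorm n v <= 1 -> rsum n (fun i => Cabs2 (mvapply n Y v i)) <= INR n * (INR n * (d * 2)) ^ 2.
Proof.
  intros Hd HY Hv. rewrite <- (rsum_const n). apply rsum_le. intros i Hi.
  eapply Rle_trans. apply Cabs2_le_N1.
  assert (H : N1 (mvapply n Y v i) <= INR n * (d * 2)).
  { unfold mvapply. eapply Rle_trans. apply N1_csum. rewrite <- (rsum_const n). apply rsum_le.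
    intros k Hk. eapply Rle_trans. apply N1_mul. apply Rmult_le_compat; auto using N1_nonneg.
    apply (vnorm_le1_N1 n); auto. }
  pose proof (N1_nonneg (mvapply n Y v i)). nra.
Qed.

Lemma mv_split n P Q R v i : (forall j, P i j = Cadd (Q i j) (R i j)) ->
  mvapply n P v i = Cadd (mvapply n Q v i) (mvapply n R v i).
Proof.
  intros H. unfold mvapply. apply injective_projections; simpl.
  - rewrite !fst_csum, <- rsum_plus. apply rsum_ext. intros k _. rewrite H.
    destruct (Q i k), (R i k), (v k). simpl. ring.
  - rewrite !snd_csum, <- rsum_plus. apply rsum_ext. intros k _. rewrite H.
    destruct (Q i k), (R i k), (v k). simpl. ring.
Qed.

Lemma rsum_lin2 n a b f g : rsum n (fun k => a * f k + b * g k) = a * rsum n f + b * rsum n g.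
Proof. rewrite rsum_plus, !rsum_scal. auto. Qed.

Lemma mv_scal n c P Q v i : (forall j, P i j = Cmul c (Q i j)) ->
  mvapply n P v i = Cmul c (mvapply n Q v i).
Proof.
  intros H. unfold mvapply. destruct c as [c1 c2]. apply injective_projections; simpl.
  - rewrite !fst_csum, !snd_csum.
    transitivity (rsum n (fun k => c1 * fst (Cmul (Q i k) (v k)) + (- c2) * snd (Cmul (Q i k) (v k)))).
    apply rsum_ext. intros k _. rewrite H. destruct (Q i k), (v k). simpl. ring.
    rewrite rsum_lin2. ring.
  - rewrite !fst_csum, !snd_csum.
    transitivity (rsum n (fun k => c1 * snd (Cmul (Q i k) (v k)) + c2 * fst (Cmul (Q i k) (v k)))).
    apply rsum_ext. intros k _. rewrite H. destruct (Q i k), (v k). simpl. ring.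
    rewrite rsum_lin2. ring.
Qed.

Lemma N1_scal s a : 0 <= s -> N1 (Cmul (0, - s) a) = s * N1 a.
Proof.
  intros Hs. destruct a as [a1 a2]. unfold N1, Cmul; simpl.
  replace (0 * a1 - - s * a2) with (s * a2) by ring. replace (0 * a2 + - s * a1) with (- (s * a1)) by ring.
  rewrite Rabs_Ropp, !Rabs_mult, (Rabs_right s) by lra. ring.
Qed.

Lemma N1_opp z : N1 (Copp z) = N1 z.
Proof. unfold N1, Copp; simpl. rewrite !Rabs_Ropp. auto. Qed.

Lemma split_ineq s z y : 0 <= s -> s * Cabs2 z <= s * (1 + s) * Cabs2 (Cadd z y) + (1 + s) * Cabs2 y.
Proof. intros Hs. destruct z as [a b], y as [c d]. unfold Cabs2, Cadd; simpl.
  pose proof (pow2_ge_0 (s*(a+c) + c)). pose proof (pow2_ge_0 (s*(b+d)+d)).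
  apply Rminus_le. 
  replace (s * (a * a + b * b) - (s * (1 + s) * ((a + c) * (a + c) + (b + d) * (b + d)) + (1 + s) * (c * c + d * d)))
   with (- ((s*(a+c) + c)^2 + (s*(b+d)+d)^2)) by ring. lra. Qed.
Lemma key n (A B : Mat) (gamma : R -> R) mA mB (v : Vec)
  (HmA : 0 <= mA) (HA : forall i j, (i < n)%nat -> (j < n)%nat -> N1 (A i j) <= mA)
  (HmB : 0 <= mB) (HB : forall i j, (i < n)%nat -> (j < n)%nat -> N1 (B i j) <= mB)
  (hbound : forall t, 0 <= t ->
     forall E F : Mat,
       is_expm n (mscal (0, - t) A) E ->
       is_expm n (mscal (0, - t) B) F ->
       forall r, is_opnorm n (msub E F) r -> r <= t * gamma t)
  (Hv : vnorm n v <= 1) (s : R) (Hs : 0 < s) (Hs1 : s <= 1)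
  (Hs2 : s * (INR n * (mA + mB)) <= 1) :
  0 <= gamma s /\
  rsum n (fun i => Cabs2 (mvapply n (msub A B) v i)) <=
    (1 + s) * gamma s ^ 2 + s * (2 * (INR n * (INR n * (2 * (INR n)^2 * (mA^2 + mB^2) * 2)) ^ 2)).
Proof.
  set (MA := mscal (0, - s) A). set (MB := mscal (0, - s) B).
  assert (HMA : forall i j, (i < n)%nat -> (j < n)%nat -> N1 (MA i j) <= s * mA).
  { intros. unfold MA, mscal. rewrite N1_scal by lra. apply Rmult_le_compat_l; auto; lra. }
  assert (HMB : forall i j, (i < n)%nat -> (j < n)%nat -> N1 (MB i j) <= s * mB).
  { intros. unfold MB, mscal. rewrite N1_scal by lra. apply Rmult_le_compat_l; auto; lra. }
  destruct (expm_exists n MA) as [E HE]. destruct (expm_exists n MB) as [F HF].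
  pose proof (pos_INR n) as Hn.
  assert (P1 : 0 <= INR n * (s * mA)) by (apply Rmult_le_pos; auto; apply Rmult_le_pos; lra).
  assert (P2 : 0 <= INR n * (s * mB)) by (apply Rmult_le_pos; auto; apply Rmult_le_pos; lra).
  assert (HxA : INR n * (s * mA) <= 1) by lra. assert (HxB : INR n * (s * mB) <= 1) by lra.
  pose proof (expm_rem n MA E (s * mA) ltac:(apply Rmult_le_pos; lra) HxA HMA HE) as RA.
  pose proof (expm_rem n MB F (s * mB) ltac:(apply Rmult_le_pos; lra) HxB HMB HF) as RB.
  destruct (entry_bound n (msub E F)) as [mEF [HmEF HEF]].
  destruct (completeness (fun x => exists v : Vec, vnorm n v <= 1 /\ x = vnorm n (mvapply n (msub E F) v))) as [r Hr].
  { exists (sqrt (INR n * (INR n * (mEF * 2)) ^ 2)). intros x [w [Hw ->]]. unfold vnorm.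
    apply sqrt_le_1_alt. apply Yv_bound; auto. }
  { exists (vnorm n (mvapply n (msub E F) v)). exists v. auto. }
  pose proof (hbound s ltac:(lra) E F HE HF r Hr) as Hrb.
  set (W := mvapply n (msub E F) v).
  assert (HWr : vnorm n W <= r) by (apply (proj1 Hr); exists v; auto).
  assert (HW0 : 0 <= vnorm n W) by apply sqrt_pos.
  assert (Hg : 0 <= gamma s) by nra.
  split; auto.
  assert (HSW : rsum n (fun i => Cabs2 (W i)) <= (s * gamma s) ^ 2).
  { unfold vnorm in HWr, HW0. rewrite <- (sqrt_sqrt (rsum n (fun i => Cabs2 (W i)))). nra.
    apply rsum_nonneg; intros; apply Cabs2_nonneg. }
  set (Y := msub (msub E (fun i j => Cadd (mid i j) (MA i j))) (msub F (fun i j => Cadd (mid i j) (MB i j)))).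
  set (c := 2 * (INR n)^2 * (mA^2 + mB^2)).
  assert (HY : forall i j, (i < n)%nat -> (j < n)%nat -> N1 (Y i j) <= s^2 * c).
  { intros i j Hi Hj. unfold Y, msub. eapply Rle_trans. apply N1_add. rewrite N1_opp.
    destruct (RA i j Hi Hj) as [RA1 RA2]. destruct (RB i j Hi Hj) as [RB1 RB2].
    assert (Eq : s^2 * c = 2 * (INR n * (s * mA))^2 + 2 * (INR n * (s * mB))^2) by (unfold c; ring).
    rewrite Eq. unfold N1, Cadd, Copp; cbn [fst snd]. unfold Rminus in *. lra. }
  assert (HSY : rsum n (fun i => Cabs2 (mvapply n Y v i)) <= s^4 * (INR n * (INR n * (c * 2)) ^ 2)).
  { assert (Hc0 : 0 <= s^2 * c).
    { apply Rmult_le_pos. apply pow2_ge_0. unfold c. apply Rmult_le_pos. apply Rmult_le_pos. lra. apply pow2_ge_0.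
      pose proof (pow2_ge_0 mA); pose proof (pow2_ge_0 mB); lra. }
    eapply Rle_trans. apply (Yv_bound n Y (s^2 * c) v Hc0 HY Hv). right; ring. }
  set (D := msub A B).
  assert (HZ : forall i, s * Cabs2 (mvapply n (msub MA MB) v i) <=
      s * (1 + s) * Cabs2 (W i) + (1 + s) * Cabs2 (mvapply n Y v i)).
  { intros i. unfold W. rewrite (mv_split n (msub E F) (msub MA MB) Y v i). apply split_ineq; lra.
    intros j. unfold Y. unfold msub. cbv beta. destruct (E i j), (F i j), (MA i j), (MB i j), (mid i j). unfold Cadd, Copp; cbn [fst snd].
    f_equal; ring. }
  assert (HZD : forall i, Cabs2 (mvapply n (msub MA MB) v i) = s^2 * Cabs2 (mvapply n D v i)).
  { intros i. rewrite (mv_scal n (0, - s) (msub MA MB) D v i).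
    destruct (mvapply n D v i). unfold Cabs2, Cmul; simpl. ring.
    intros j. unfold MA, MB, D, msub, mscal. destruct (A i j), (B i j). unfold Cadd, Copp, Cmul; simpl. f_equal; ring. }
  assert (Hsum : s * (s^2 * rsum n (fun i => Cabs2 (mvapply n D v i))) <=
      s * (1 + s) * (s * gamma s) ^ 2 + (1 + s) * (s^4 * (INR n * (INR n * (c * 2)) ^ 2))).
  { rewrite <- !rsum_scal. eapply Rle_trans.
    apply (rsum_le n _ (fun i => s * (1 + s) * Cabs2 (W i) + (1 + s) * Cabs2 (mvapply n Y v i))).
    intros i _. rewrite <- HZD. apply HZ. rewrite rsum_lin2.
    apply Rplus_le_compat; apply Rmult_le_compat_l; auto; nra. }
  set (SD := rsum n (fun i => Cabs2 (mvapply n D v i))) in *.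
  set (K0 := INR n * (INR n * (c * 2)) ^ 2) in *.
  assert (HK0 : 0 <= K0) by (unfold K0; pose proof (pos_INR n); apply Rmult_le_pos; auto; apply pow2_ge_0).
  assert (s^3 * SD <= s^3 * ((1 + s) * gamma s ^ 2 + s * (2 * K0))).
  { replace (s^3 * SD) with (s * (s^2 * SD)) by ring. eapply Rle_trans. apply Hsum.
    assert (H4 : 0 <= s^4 * K0) by (apply Rmult_le_pos; auto; apply pow_le; lra).
    assert (H5 : 0 <= (1 - s) * (s^4 * K0)) by (apply Rmult_le_pos; lra).
    apply Rminus_le.
    replace (s * (1 + s) * (s * gamma s) ^ 2 + (1 + s) * (s ^ 4 * K0) - s ^ 3 * ((1 + s) * gamma s ^ 2 + s * (2 * K0)))
      with (- ((1 - s) * (s^4 * K0))) by ring. lra. }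
  apply Rmult_le_reg_l with (s^3). apply pow_lt; lra. auto.
Qed.
Lemma le_div_mul s a b : 0 < b -> s <= a / b -> s * b <= a.
Proof. intros Hb H. apply Rmult_le_compat_r with (r := b) in H; [|lra].
  unfold Rdiv in H. rewrite Rmult_assoc, Rinv_l in H by lra. lra. Qed.

Lemma final_arith X g0 gs gt d s K SD : d = X - gt -> 0 < d -> 0 <= gs -> gs < g0 + d/2 -> g0 <= gt -> 0 < s ->
  s * (8 * (X^2 + K + 1)) <= d^2 -> 0 <= K -> X * X = SD -> SD <= (1+s) * gs^2 + s * K -> False.
Proof.
  intros Hd Hd0 Hgs Hgs2 Hg0 Hs Hsd HK HXS HSD. subst SD.
  set (Y0 := X - d / 2).
  assert (HY0 : gs <= Y0) by (unfold Y0; lra).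
  assert (Hsq : gs ^ 2 <= Y0 ^ 2) by nra.
  assert (HXY : Y0 ^ 2 + d^2 / 4 < X ^ 2) by (unfold Y0; nra).
  assert (s * Y0^2 <= s * X^2) by nra.
  assert (X ^ 2 <= Y0 ^ 2 + s * Y0^2 + s * K) by nra.
  nra.
Qed.

Theorem mainTheorem4 (n : nat) (A B : Mat) (gamma : R -> R)
  (hA : hermitian n A) (hB : hermitian n B)
  (hmono : nondecreasing_on_nonneg gamma)
  (hcont : continuous_on_nonneg gamma)
  (hbound : forall t, 0 <= t ->
     forall E F : Mat,
       is_expm n (mscal (0, - t) A) E ->
       is_expm n (mscal (0, - t) B) F ->
       forall r, is_opnorm n (msub E F) r -> r <= t * gamma t) :
  forall t, 0 <= t ->
    forall r, is_opnorm n (msub A B) r -> r <= gamma t.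
Proof.
  intros t Ht r Hr.
  destruct (entry_bound n A) as [mA [HmA HA]]. destruct (entry_bound n B) as [mB [HmB HB]].
  pose proof (pos_INR n) as Hn.
  set (K := 2 * (INR n * (INR n * (2 * (INR n)^2 * (mA^2 + mB^2) * 2)) ^ 2)).
  assert (HK : 0 <= K) by (unfold K; apply Rmult_le_pos; [lra| apply Rmult_le_pos; auto; apply pow2_ge_0]).
  set (N := INR n * (mA + mB)).
  assert (HN : 0 <= N) by (unfold N; apply Rmult_le_pos; lra).
  apply (proj2 Hr). intros x [v [Hv ->]].
  set (X := vnorm n (mvapply n (msub A B) v)).
  set (SD := rsum n (fun i => Cabs2 (mvapply n (msub A B) v i))).
  assert (HX0 : 0 <= X) by apply sqrt_pos.
  assert (HXS : X * X = SD) by (apply sqrt_sqrt; apply rsum_nonneg; intros; apply Cabs2_nonneg).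
  destruct (Rle_or_lt X (gamma t)) as [Hle|Hlt]; auto. exfalso.
  set (d := X - gamma t).
  assert (Hd : 0 < d) by (unfold d; lra).
  destruct (hcont 0 (Rle_refl 0) (d / 2) ltac:(lra)) as [d0 [Hd0 Hc]].
  pose proof (hmono 0 t (Rle_refl 0) Ht) as Hg0t.
  set (s := Rmin (Rmin (/ (N + 1)) 1) (Rmin (d0 / 2) (d^2 / (8 * (X^2 + K + 1))))).
  assert (Hpos : 0 < d^2 / (8 * (X^2 + K + 1))).
  { apply Rdiv_lt_0_compat. nra. pose proof (pow2_ge_0 X). lra. }
  assert (Hs : 0 < s).
  { unfold s. apply Rmin_glb_lt; apply Rmin_glb_lt; try lra. apply Rinv_0_lt_compat; lra. }
  assert (Hs1 : s <= 1) by (unfold s; eapply Rle_trans; [apply Rmin_l | apply Rmin_r]).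
  assert (HsN : s * N <= 1).
  { assert (s <= 1 / (N + 1)) by (unfold s, Rdiv; rewrite Rmult_1_l; eapply Rle_trans; [apply Rmin_l | apply Rmin_l]).
    apply le_div_mul in H; lra. }
  assert (Hsd0 : s < d0).
  { assert (s <= d0 / 2) by (unfold s; eapply Rle_trans; [apply Rmin_r | apply Rmin_l]). lra. }
  assert (Hsd : s * (8 * (X^2 + K + 1)) <= d^2).
  { apply le_div_mul. pose proof (pow2_ge_0 X). lra. unfold s; eapply Rle_trans; [apply Rmin_r | apply Rmin_r]. }
  destruct (key n A B gamma mA mB v HmA HA HmB HB hbound Hv s Hs Hs1 HsN) as [Hgs HSD].
  fold K in HSD. fold SD in HSD.
  assert (Hgs2 : gamma s < gamma 0 + d / 2).
  { specialize (Hc s ltac:(lra) ltac:(rewrite Rminus_0_r, Rabs_right; lra)). revert Hc. rabs_all; intros; lra. }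
  apply (final_arith X (gamma 0) (gamma s) (gamma t) d s K SD); auto.
Qed.
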